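(* Let $r$ be a normalized formal generalized $r$-matrix. Then $\mathfrak g(r)\cap z^{-1}\mathfrak g[\![z]\!]=\{(1\otimes\alpha)r(z,0)\mid\alpha\in\mathfrak g^*\}$, and this subspace generates $\mathfrak g(r)$ as a Lie algebra.
   Context: $\Bbbk$ is a field of characteristic $0$, $\mathfrak g$ a finite-dimensional semisimple Lie algebra over $\Bbbk$ of dimension $d$ with Killing form $\kappa$, $\{b_i\}$ a $\kappa$-orthonormal basis, $\gamma=\sum_i b_i\otimes b_i$, and $\frac{1}{x-y}=\sum_{k\ge0}x^{-k-1}y^k$. A series $r\in(\mathfrak g\otimes\mathfrak g)(\!(x)\!)[\![y]\!]$ is in normalized standard form if $r=\frac{\gamma}{x-y}+r_0$ with $r_0\in(\mathfrak g\otimes\mathfrak g)[\![x,y]\!]$; then $\bar r(x,y)=\frac{\gamma}{x-y}-\tau(r_0(y,x))$, $\tau$ the flip. With $s^{ij}$ meaning substitution $(x,y)=(x_i,x_j)$ and placement of tensor factors in positions $i,j$ inside $(U(\mathfrak g)^{\otimes 3})\otimes\Bbbk(\!(x_1)\!)(\!(x_2)\!)[\![x_3]\!]$, a normalized formal generalized $r$-matrix is such an $r$ with $[r^{12},r^{13}]+[r^{12},r^{23}]+[r^{13},\bar r^{23}]=0$. For $s=\sum_{k,i}s_{k,i}(x)\otimes b_iy^k$, $\mathfrak g(s)=\mathrm{span}_\Bbbk\{s_{k,i}(z)\}\subseteq\mathfrak g(\!(z)\!)$. Here $r(z,0)\in\mathfrak g(\!(z)\!)\otimes\mathfrak g$ is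 the $y^0$-coefficient and $(1\otimes\alpha)$ applies $\alpha$ to the second factor. *)

(* Defs.v *)
From HB Require Import structures.
From mathcomp Require Import all_boot all_order all_algebra.
Set Implicit Arguments. Unset Strict Implicit. Unset Printing Implicit Defensive.
Import GRing.Theory.
Local Open Scope ring_scope.

Section LieDefs.
Variables (K : fieldType) (g : vectType K).

Definition is_lie_bracket (br : g -> g -> g) : Prop :=
  [/\ forall a : g, linear (br a), forall c : g, linear (br^~ c),
      forall a : g, br a a = 0 &
      forall a c e : g, br a (br c e) + br c (br e a) + br e (br a c) = 0].

Definition killing (br : g -> g -> g) (x y : g) : K :=
  \sum_(i < \dim {: g}) coord (vbasis {: g}) i (br x (br y (tnth (vbasis {: g}) i))).

Definition lie_ideal (br : g -> g -> g) (I : {vspace g}) : Prop :=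
  forall x y : g, y \in I -> br x y \in I.

(* [I,I] = span of the brackets [u,v], u v in I; by bilinearity it is
   spanned by brackets of basis vectors of I. *)
Definition derived (br : g -> g -> g) (I : {vspace g}) : {vspace g} :=
  <<[seq br u v | u <- tval (vbasis I), v <- tval (vbasis I)]>>%VS.

Definition lie_solvable (br : g -> g -> g) (I : {vspace g}) : Prop :=
  exists n : nat, iter n (derived br) I = 0%VS.

Definition lie_semisimple (br : g -> g -> g) : Prop :=
  forall I : {vspace g}, lie_ideal br I -> lie_solvable br I -> I = 0%VS.

(* bracket of two Laurent series f, h vanishing below N resp. M:
   [f,h]_n = sum_{m} [f_m, h_{n-m}] with m ranging over N .. n-M *)
Definition lbr (br : g -> g -> g) (N M : int) (f h : int -> g) : int -> g :=
  fun n => \sum_(i < (absz (n - N - M)%R).+1) br (f (N + i%:Z)) (h (n - N - i%:Z)).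

Inductive lie_gen (br : g -> g -> g) (S : (int -> g) -> Prop) : (int -> g) -> Prop :=
| lg_base f : S f -> lie_gen br S f
| lg_zero : lie_gen br S (fun _ => 0)
| lg_add f h : lie_gen br S f -> lie_gen br S h -> lie_gen br S (fun n => f n + h n)
| lg_scale (a : K) f : lie_gen br S f -> lie_gen br S (fun n => a *: f n)
| lg_br (N M : int) f h : lie_gen br S f -> lie_gen br S h ->
    (forall n, n < N -> f n = 0) -> (forall n, n < M -> h n = 0) ->
    lie_gen br S (lbr br N M f h).

Variables (d : nat) (b : d.-tuple g).

(* A series r = gamma/(x-y) + r0 in normalized standard form is given by
   r0 in (g (x) g)[[x,y]], encoded as r0 p q i : g, meaning
   r0 = sum_{p,q,i} (r0 p q i) (x) b_i x^p y^q.
   rcoef r0 k i n = coefficient of x^n in r_{k,i}(x), where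
   r = sum_{k,i} r_{k,i}(x) (x) b_i y^k. *)
Definition rcoef (r0 : nat -> nat -> 'I_d -> g) (k : nat) (i : 'I_d) (n : int) : g :=
  (if n == - (k%:Z + 1) then tnth b i else 0) +
  (if n is Posz p then r0 p k i else 0).

(* coefficient of x^p y^q of rbar(x,y) = gamma/(x-y) - tau(r0(y,x)),
   written as sum_j (barcoef p q j) (x) b_j *)
Definition barcoef (r0 : nat -> nat -> 'I_d -> g) (p : int) (q : nat) (j : 'I_d) : g :=
  (if p == - (q%:Z + 1) then tnth b j else 0) -
  (if p is Posz p' then \sum_(i < d) coord b j (r0 q p' i) *: tnth b i else 0).

(* Coefficients of x1^a x2^bb x3^c of the three terms of the generalized CYBE,
   each an element of g (x) g (x) g written as sum_{m,n} T m n (x) b_m (x) b_n. *)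
Definition cybe1 br r0 (a bb : int) (c : nat) (m n : 'I_d) : g :=
  if bb is Posz bn then
    \sum_(i < (absz (a + bn%:Z + c%:Z + 2)%R).+1)
       br (rcoef r0 bn m (- (bn%:Z + 1) + i%:Z)) (rcoef r0 c n (a + bn%:Z + 1 - i%:Z))
  else 0.

Definition cybe2 br r0 (a bb : int) (c : nat) (m n : 'I_d) : g :=
  \sum_(i < (absz (bb + c%:Z + 1)%R).+1) \sum_(j < d)
     coord b m (br (tnth b j) (rcoef r0 c n (bb - i%:Z))) *: rcoef r0 i j a.

Definition cybe3 br r0 (a bb : int) (c : nat) (m n : 'I_d) : g :=
  \sum_(i < c.+1) \sum_(l < d) \sum_(j < d)
     (coord b m (barcoef r0 bb (c - i) j) * coord b n (br (tnth b l) (tnth b j)))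
       *: rcoef r0 i l a.

Definition normalized_gen_rmatrix (br : g -> g -> g) (r0 : nat -> nat -> 'I_d -> g) : Prop :=
  forall (a bb : int) (c : nat) (m n : 'I_d),
    cybe1 br r0 a bb c m n + cybe2 br r0 a bb c m n + cybe3 br r0 a bb c m n = 0.

Definition in_gr (r0 : nat -> nat -> 'I_d -> g) (f : int -> g) : Prop :=
  exists (N : nat) (cf : nat -> 'I_d -> K),
    f = (fun z => \sum_(k < N) \sum_(i < d) cf k i *: rcoef r0 k i z).

End LieDefs.

(* Main.v *)
Require Import Defs.
From HB Require Import structures.
From mathcomp Require Import all_boot all_order all_algebra zify.
From Stdlib Require Import FunctionalExtensionality.
Set Implicit Arguments. Unset Strict Implicit. Unset Printing Implicit Defensive.
Import Order.TTheory GRing.Theory Num.Theory.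
Local Open Scope ring_scope.

Section S.
Variables (K : fieldType) (g : vectType K) (br : g -> g -> g) (hlie : is_lie_bracket br).

Lemma brDr a u v : br a (u + v) = br a u + br a v.
Proof. case: hlie => h _ _ _; by have := h a 1 u v; rewrite !scale1r. Qed.
Lemma br0r a : br a 0 = 0.
Proof. have H := brDr a 0 0; rewrite addr0 in H; apply: (@addrI _ (br a 0)); by rewrite addr0 -H. Qed.
Lemma brZr a k u : br a (k *: u) = k *: br a u.
Proof. case: hlie => h _ _ _; by have := h a k u 0; rewrite !addr0 br0r addr0. Qed.
Lemma brDl a u v : br (u + v) a = br u a + br v a.
Proof. case: hlie => _ h _ _; by have := h a 1 u v; rewrite !scale1r. Qed.
Lemma br0l a : br 0 a = 0.
Proof. have H := brDl a 0 0; rewrite addr0 in H; apply: (@addrI _ (br 0 a)); by rewrite addr0 -H. Qed.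
Lemma brZl a k u : br (k *: u) a = k *: br u a.
Proof. case: hlie => _ h _ _; by have := h a k u 0; rewrite !addr0 br0l addr0. Qed.
Lemma br_suml I (r : seq I) P (F : I -> g) a :
  br (\sum_(i <- r | P i) F i) a = \sum_(i <- r | P i) br (F i) a.
Proof. exact: (big_morph (br^~ a) (fun u v => brDl a u v) (br0l a)). Qed.
Lemma br_sumr I (r : seq I) P (F : I -> g) a :
  br a (\sum_(i <- r | P i) F i) = \sum_(i <- r | P i) br a (F i).
Proof. exact: (big_morph (br a) (fun u v => brDr a u v) (br0r a)). Qed.
Lemma brA a u : br a u = - br u a.
Proof.
case: hlie => _ _ h _; apply/eqP; rewrite -addr_eq0.
by have := h (a + u); rewrite brDl !brDr !h add0r addr0 => ->.
Qed.
End S.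
Section R.
Variables (K : fieldType) (g : vectType K) (d : nat) (b : d.-tuple g)
  (r0 : nat -> nat -> 'I_d -> g).

Lemma rcoef_lt k i n : n < - (k%:Z + 1) -> rcoef b r0 k i n = 0.
Proof.
move=> h; rewrite /rcoef (lt_eqF h) add0r.
case: n h => // p h; exfalso; move: h; lia.
Qed.

Lemma rcoef_neg k k' i : rcoef b r0 k i (- (k'%:Z + 1)) = if k == k' then tnth b i else 0.
Proof.
rewrite /rcoef.
have -> : (- (k'%:Z + 1) == - (k%:Z + 1)) = (k == k').
  apply/eqP/eqP; lia.
have -> : (match - (k'%:Z + 1) with Posz p => r0 p k i | _ => 0 end) = 0.
  by rewrite -PoszD addn1.
by rewrite addr0.
Qed.

Lemma in_gr_van N (cf : nat -> 'I_d -> K) n : n < - (N%:Z) ->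
  \sum_(k < N) \sum_(i < d) cf k i *: rcoef b r0 k i n = 0.
Proof.
move=> h; apply: big1 => k _; apply: big1 => i _.
rewrite rcoef_lt ?scaler0 //; have := ltn_ord k; lia.
Qed.

Variable (hb : basis_of fullv b).

Lemma part1_fwd f : in_gr b r0 f -> (forall n, n < -1 -> f n = 0) ->
  exists c : 'I_d -> K, f = fun n => \sum_(i < d) c i *: rcoef b r0 0 i n.
Proof.
case=> N [cf ->] hz.
have hc : forall k i, (0 < k < N)%N -> cf k i = 0.
  move=> k i /andP[k0 kN].
  have := hz (- (k%:Z + 1)) ltac:(lia).
  rewrite (bigD1 (Ordinal kN)) //= (big1 _ (fun k0 : 'I_N => k0 != Ordinal kN)) ?addr0; last first.
    move=> k' hk'; apply: big1 => j _; rewrite rcoef_neg.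
    by case: eqP => [e|]; [case/eqP: hk'; apply: val_inj | rewrite scaler0].
  under eq_bigr do rewrite rcoef_neg eqxx (tnth_nth 0).
  by move=> H; move/freeP: (basis_free hb) => /(_ _ H); apply.
exists (fun i => if (0 < N)%N then cf 0%N i else 0).
apply: functional_extensionality => n.
clear hz; case: N cf hc => [|N] cf hc.
  by rewrite big_ord0; symmetry; apply: big1 => i _; rewrite scale0r.
rewrite big_ord_recl [X in _ + X]big1 ?addr0 // => k _; apply: big1 => j _.
by rewrite hc ?scale0r //= /bump /= ltnS ltn_ord.
Qed.


Definition afun (c : 'I_d -> K) (x : g) : K^o := \sum_(i < d) c i * coord b i x.
Lemma afun_lin c : linear (afun c).
Proof.
move=> k u v; rewrite /afun scaler_sumr -big_split /=; apply: eq_bigr => i _.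
by rewrite linearP /= mulrDr mulrCA.
Qed.
HB.instance Definition _ c := GRing.isLinear.Build K g K^o *:%R (afun c) (afun_lin c).

Lemma afun_b c j : afun c (tnth b j) = c j.
Proof.
rewrite /afun (bigD1 j) //= big1 ?addr0.
  by rewrite (tnth_nth 0) coord_free ?eqxx ?mulr1 // (basis_free hb).
by move=> i hi; rewrite (tnth_nth 0) coord_free ?(basis_free hb) // eq_sym (negbTE hi) mulr0.
Qed.

Lemma part1 f : (in_gr b r0 f /\ (forall n : int, n < - 1 -> f n = 0)) <->
     (exists alpha : {linear g -> K^o},
        f = (fun n => \sum_(i < d) alpha (tnth b i) *: rcoef b r0 0 i n)).
Proof.
split.
  case=> h1 h2; have [c ->] := part1_fwd h1 h2.
  exists (afun c : {linear g -> K^o}); apply: functional_extensionality => n.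
  by apply: eq_bigr => i _; rewrite /= afun_b.
case=> alpha ->; split.
  exists 1%N, (fun _ i => alpha (tnth b i)); apply: functional_extensionality => n.
  by rewrite big_ord1.
move=> n hn; apply: big1 => i _; rewrite rcoef_lt ?scaler0 //.
Qed.

End R.

Section L.
Variables (K : fieldType) (g : vectType K) (br : g -> g -> g) (hlie : is_lie_bracket br)
  (hss : lie_semisimple br) (d : nat) (b : d.-tuple g) (hb : basis_of fullv b).

Lemma central_zero x : (forall y, br x y = 0) -> x = 0.
Proof.
move=> hx.
have hx' : forall y, br y x = 0 by move=> y; rewrite (brA hlie) hx oppr0.
have I0 : <[x]>%VS = 0%VS.
  apply: hss.
    by move=> y z /vlineP[k ->]; rewrite (brZr hlie) hx' scaler0 mem0v.
  exists 1%N; rewrite /= /derived; apply/eqP; rewrite -subv0.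
  apply/span_subvP => w /allpairsP[[u v] /= [hu hv ->]].
  have /vlineP[k ->] := vbasis_mem hu.
  by rewrite (brZl hlie) hx scaler0 memv0.
by apply/eqP; rewrite -memv0 -I0 memv_line.
Qed.

Lemma b_expand v : v = \sum_(i < d) coord b i v *: tnth b i.
Proof.
rewrite {1}(coord_basis hb (memvf v)); apply: eq_bigr => i _; by rewrite (tnth_nth 0).
Qed.

Lemma span_br j0 : exists lam : 'I_#|{: 'I_d * 'I_d}| -> K, forall j : 'I_d,
  \sum_p lam p * coord b (enum_val p).1 (br (tnth b j) (tnth b (enum_val p).2)) = (j == j0)%:R.
Proof.
pose A : 'M[K]_(d, #|{: 'I_d * 'I_d}|) :=
  \matrix_(j, p) coord b (enum_val p).1 (br (tnth b j) (tnth b (enum_val p).2)).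
have : row_free A.
  rewrite -kermx_eq0; apply/rowV0P => u /sub_kermxP hu.
  pose x := \sum_(j < d) u 0 j *: tnth b j.
  have hc : forall m n, coord b m (br x (tnth b n)) = 0.
    move=> m n; move/matrixP: hu => /(_ 0 (enum_rank (m, n))).
    rewrite !mxE /x (br_suml hlie) linear_sum /= => H; apply: (etrans _ H).
    apply: eq_bigr => j _; rewrite (brZl hlie) linearZ /= !mxE enum_rankK //.
  have hxb : forall n, br x (tnth b n) = 0.
    move=> n; rewrite (b_expand (br x (tnth b n))); apply: big1 => m _.
    by rewrite hc scale0r.
  have x0 : x = 0.
    apply: central_zero => y; rewrite (b_expand y) (br_sumr hlie); apply: big1 => i _.
    by rewrite (brZr hlie) hxb scaler0.
  apply/rowP => j; rewrite mxE.
  move/freeP: (basis_free hb) => /(_ (fun j => u 0 j)) -> //.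
  rewrite -[X in _ = X]x0 /x; apply: eq_bigr => i _; by rewrite (tnth_nth 0).
case/row_freeP => B hB.
exists (fun p => B p j0) => j.
move/matrixP: hB => /(_ j j0); rewrite !mxE => <-.
by apply: eq_bigr => p _; rewrite mxE mulrC.
Qed.
End L.

Lemma int_sub_nat (x y : int) : x <= y -> exists p : nat, x = y - p%:Z.
Proof.
move=> h; exists (absz (y - x)); rewrite abszE ger0_norm ?subr_ge0 //; lia.
Qed.

Section P.
Variables (K : fieldType) (g : vectType K) (br : g -> g -> g) (hlie : is_lie_bracket br).

Definition van (f : int -> g) (N : int) := forall n, n < N -> f n = 0.

Lemma van_le f N N' : N' <= N -> van f N -> van f N'.
Proof. move=> h hf n hn; apply: hf; lia. Qed.

Lemma lbr_shiftN N M f h : van f N -> van h M -> lbr br N M f h = lbr br (N - 1) M f h.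
Proof.
move=> hf hh; apply: functional_extensionality => n; rewrite /lbr.
have -> : n - (N - 1) - M = (n - N - M) + 1 by lia.
case: (ltP (n - N - M) 0) => hL.
  rewrite big1; last by move=> i _; rewrite hh ?(br0r hlie) //; lia.
  symmetry; apply: big1 => -[[|i] hi] _ /=.
    by rewrite hf ?(br0l hlie) //; lia.
  by rewrite hh ?(br0r hlie) //; lia.
have [l El] : exists l : nat, n - N - M = l%:Z.
  by exists (absz (n - N - M)%R); rewrite abszE ger0_norm.
rewrite El -PoszD addn1 /=.
rewrite [RHS]big_ord_recl /= hf ?(br0l hlie) ?add0r; last by lia.
apply: eq_bigr => i _; rewrite /bump /=; congr (br (f _) (h _)); lia.
Qed.

Lemma lbr_shiftM N M f h : van f N -> van h M -> lbr br N M f h = lbr br N (M - 1) f h.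
Proof.
move=> hf hh; apply: functional_extensionality => n; rewrite /lbr.
have -> : n - N - (M - 1) = (n - N - M) + 1 by lia.
case: (ltP (n - N - M) 0) => hL.
  rewrite big1; last by move=> i _; rewrite hh ?(br0r hlie) //; lia.
  by symmetry; apply: big1 => i _; rewrite hh ?(br0r hlie) //; lia.
have [l El] : exists l : nat, n - N - M = l%:Z.
  by exists (absz (n - N - M)%R); rewrite abszE ger0_norm.
rewrite El -PoszD addn1 /=.
rewrite [RHS]big_ord_recr /= hh ?(br0r hlie) ?addr0 //; lia.
Qed.

Lemma lbr_bound N M N' M' f h : N' <= N -> M' <= M -> van f N -> van h M ->
  lbr br N M f h = lbr br N' M' f h.
Proof.
move=> /int_sub_nat [p ->] /int_sub_nat [q ->] hf hh.
have eN : forall p N, van f N -> lbr br N M f h = lbr br (N - p%:Z) M f h.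
  elim=> [|p' IH] N0 hf0; first by rewrite subr0.
  rewrite IH // lbr_shiftN //; last by apply: van_le hf0; lia.
  by have -> : N0 - (p'.+1)%:Z = N0 - p'%:Z - 1 by lia.
have eM : forall q M N, van f N -> van h M -> lbr br N M f h = lbr br N (M - q%:Z) f h.
  elim=> [|q' IH] M0 N0 hf0 hh0; first by rewrite subr0.
  rewrite IH // lbr_shiftM //; last by apply: van_le hh0; lia.
  by have -> : M0 - (q'.+1)%:Z = M0 - q'%:Z - 1 by lia.
rewrite (eN p) // (eM q) //; apply: van_le hf; lia.
Qed.

Lemma lbr_suml N M A (F : 'I_A -> int -> g) h n :
  lbr br N M (fun z => \sum_(k < A) F k z) h n = \sum_(k < A) lbr br N M (F k) h n.
Proof.
rewrite /lbr (exchange_big); apply: eq_bigr => i _; by rewrite (br_suml hlie).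
Qed.
Lemma lbr_sumr N M A (F : 'I_A -> int -> g) f n :
  lbr br N M f (fun z => \sum_(k < A) F k z) n = \sum_(k < A) lbr br N M f (F k) n.
Proof.
rewrite /lbr (exchange_big); apply: eq_bigr => i _; by rewrite (br_sumr hlie).
Qed.
Lemma lbr_scalel N M (a : K) f h n :
  lbr br N M (fun z => a *: f z) h n = a *: lbr br N M f h n.
Proof. rewrite /lbr scaler_sumr; apply: eq_bigr => i _; by rewrite (brZl hlie). Qed.
Lemma lbr_scaler N M (a : K) f h n :
  lbr br N M f (fun z => a *: h z) n = a *: lbr br N M f h n.
Proof. rewrite /lbr scaler_sumr; apply: eq_bigr => i _; by rewrite (brZr hlie). Qed.

End P.

Section Q.
Variables (K : fieldType) (g : vectType K) (br : g -> g -> g) (hlie : is_lie_bracket br)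
  (d : nat) (b : d.-tuple g) (r0 : nat -> nat -> 'I_d -> g)
  (hr : normalized_gen_rmatrix b br r0).

Local Notation R := (rcoef b r0).
Local Notation IG := (in_gr b r0).

Lemma in_gr0 : IG (fun _ => 0).
Proof. exists 0%N, (fun _ _ => 0); apply: functional_extensionality => z; by rewrite big_ord0. Qed.

Lemma in_grZ (a : K) f : IG f -> IG (fun z => a *: f z).
Proof.
case=> N [cf ->]; exists N, (fun k i => a * cf k i); apply: functional_extensionality => z.
rewrite scaler_sumr; apply: eq_bigr => k _; rewrite scaler_sumr; apply: eq_bigr => i _.
by rewrite scalerA.
Qed.

Lemma widen_sum N N' (cf : nat -> 'I_d -> K) z : (N <= N')%N ->
  \sum_(k < N) \sum_(i < d) cf k i *: R k i z =
  \sum_(k < N') \sum_(i < d) (if (k < N)%N then cf k i else 0) *: R k i z.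
Proof.
move=> h; rewrite (big_ord_widen N' (fun k => \sum_(i < d) cf k i *: R k i z) h).
rewrite big_mkcond; apply: eq_bigr => k _; case: ifP => // _.
by symmetry; apply: big1 => i _; rewrite scale0r.
Qed.

Lemma in_grD f h : IG f -> IG h -> IG (fun z => f z + h z).
Proof.
case=> N1 [c1 ->]; case=> N2 [c2 ->].
exists (maxn N1 N2), (fun k i => (if (k < N1)%N then c1 k i else 0) + (if (k < N2)%N then c2 k i else 0)).
apply: functional_extensionality => z.
rewrite (widen_sum _ _ (leq_maxl N1 N2)) (widen_sum _ _ (leq_maxr N1 N2)) -big_split.
apply: eq_bigr => k _; rewrite -big_split; apply: eq_bigr => i _; by rewrite scalerDl.
Qed.

Lemma in_gr_sum A (F : 'I_A -> int -> g) : (forall k, IG (F k)) -> IG (fun z => \sum_(k < A) F k z).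
Proof.
elim: A F => [|A IH] F hF.
  have -> : (fun z => \sum_(k < 0) F k z) = (fun _ => 0).
    by apply: functional_extensionality => z; rewrite big_ord0.
  exact: in_gr0.
have -> : (fun z => \sum_(k < A.+1) F k z) = (fun z => \sum_(k < A) F (widen_ord (leqnSn A) k) z + F ord_max z).
  by apply: functional_extensionality => z; rewrite big_ord_recr.
apply: in_grD; last exact: hF.
exact: (IH (fun k => F (widen_ord (leqnSn A) k))).
Qed.

Lemma in_gr_R k i : IG (R k i).
Proof.
exists k.+1, (fun k' j => ((k' == k) && (j == i))%:R); apply: functional_extensionality => z.
rewrite big_ord_recr /= big1 ?add0r.
  rewrite (bigD1 i) //= big1 ?addr0 ?eqxx ?scale1r //.
  by move=> j /negbTE ->; rewrite scale0r.
move=> k' _; apply: big1 => j _.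
by rewrite (ltn_eqF (ltn_ord k')) scale0r.
Qed.

Lemma lbr_cybe1 k l i j : lbr br (- (k%:Z + 1)) (- (l%:Z + 1)) (R k i) (R l j) =
  (fun a => cybe1 b br r0 a k%:Z l i j).
Proof.
apply: functional_extensionality => a; rewrite /cybe1 /lbr.
have -> : a - - (k%:Z + 1) - - (l%:Z + 1) = a + k%:Z + l%:Z + 2 by lia.
apply: eq_bigr => t _; congr (br (R k i _) (R l j _)); lia.
Qed.

Lemma in_gr_cybe2 bb c m n : IG (fun a => cybe2 b br r0 a bb c m n).
Proof. by exists (absz (bb + c%:Z + 1)%R).+1, (fun k j => coord b m (br (tnth b j) (rcoef b r0 c n (bb - k%:Z)))). Qed.

Lemma in_gr_cybe3 bb c m n : IG (fun a => cybe3 b br r0 a bb c m n).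
Proof.
exists c.+1, (fun i l => \sum_(j < d) (coord b m (barcoef b r0 bb (c - i) j) * coord b n (br (tnth b l) (tnth b j)))).
apply: functional_extensionality => a; rewrite /cybe3; apply: eq_bigr => i _.
apply: eq_bigr => l _; by rewrite scaler_suml.
Qed.

Lemma van_R k i : van (R k i) (- (k%:Z + 1)).
Proof. rewrite /van; intros n hn; exact: (@rcoef_lt _ _ _ b r0 k i n hn). Qed.

Lemma in_gr_RR k l i j : IG (lbr br (- (k%:Z + 1)) (- (l%:Z + 1)) (R k i) (R l j)).
Proof.
rewrite lbr_cybe1.
have -> : (fun a => cybe1 b br r0 a k l i j) =
   (fun a => (-1 : K) *: ((fun a => cybe2 b br r0 a k l i j) a + (fun a => cybe3 b br r0 a k l i j) a)).
  apply: functional_extensionality => a; have := hr a k l i j.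
  by rewrite scaleN1r -addrA => /eqP; rewrite addr_eq0 => /eqP.
apply: (@in_grZ (-1) (fun a => cybe2 b br r0 a k l i j + cybe3 b br r0 a k l i j)).
exact: (in_grD (in_gr_cybe2 _ _ _ _) (in_gr_cybe3 _ _ _ _)).
Qed.


Lemma in_gr_lbr N M f h : IG f -> IG h -> van f N -> van h M -> IG (lbr br N M f h).
Proof.
move=> [A [cf Ef]] [B [ch Eh]] hf hh.
have [N' hN1 hN2] : exists2 N', N' <= N & N' <= - (A%:Z).
  by case: (lerP N (- (A%:Z))) => hl; [exists N | exists (- (A%:Z))]; lia.
have [M' hM1 hM2] : exists2 M', M' <= M & M' <= - (B%:Z).
  by case: (lerP M (- (B%:Z))) => hl; [exists M | exists (- (B%:Z))]; lia.
rewrite (lbr_bound hlie hN1 hM1 hf hh) Ef Eh.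
have -> : lbr br N' M' (fun z => \sum_(k < A) \sum_(i < d) cf k i *: R k i z)
                       (fun z => \sum_(k < B) \sum_(i < d) ch k i *: R k i z) =
  fun n => \sum_(k < A) \sum_(i < d) cf k i *: \sum_(l < B) \sum_(j < d)
            ch l j *: lbr br N' M' (R k i) (R l j) n.
  apply: functional_extensionality => n.
  rewrite (lbr_suml hlie); apply: eq_bigr => k _.
  rewrite (lbr_suml hlie); apply: eq_bigr => i _.
  rewrite (lbr_scalel hlie); congr (_ *: _).
  rewrite (lbr_sumr hlie); apply: eq_bigr => l _.
  rewrite (lbr_sumr hlie); apply: eq_bigr => j _.
  by rewrite (lbr_scaler hlie).
apply: in_gr_sum => k; apply: in_gr_sum => i; apply: in_grZ.
apply: in_gr_sum => l; apply: in_gr_sum => j; apply: in_grZ.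
rewrite -(lbr_bound hlie (N := - ((k : nat)%:Z + 1)) (M := - ((l : nat)%:Z + 1))).
- exact: in_gr_RR.
- have := ltn_ord k; lia.
- have := ltn_ord l; lia.
- exact: van_R.
- exact: van_R.
Qed.

End Q.

Section G.
Variables (K : fieldType) (g : vectType K) (br : g -> g -> g) (hlie : is_lie_bracket br)
  (hss : lie_semisimple br)
  (d : nat) (b : d.-tuple g) (hb : basis_of fullv b) (r0 : nat -> nat -> 'I_d -> g)
  (hr : normalized_gen_rmatrix b br r0).

Local Notation R := (rcoef b r0).
Local Notation IG := (in_gr b r0).
Local Notation LG := (lie_gen br (fun h => in_gr b r0 h /\ (forall n : int, n < - 1 -> h n = 0))).

Lemma LG_sum A (F : 'I_A -> int -> g) : (forall k, LG (F k)) -> LG (fun z => \sum_(k < A) F k z).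
Proof.
elim: A F => [|A IH] F hF.
  have -> : (fun z => \sum_(k < 0) F k z) = (fun _ => 0).
    by apply: functional_extensionality => z; rewrite big_ord0.
  exact: lg_zero.
have -> : (fun z => \sum_(k < A.+1) F k z) = (fun z => \sum_(k < A) F (widen_ord (leqnSn A) k) z + F ord_max z).
  by apply: functional_extensionality => z; rewrite big_ord_recr.
apply: lg_add; last exact: hF.
exact: (IH (fun k => F (widen_ord (leqnSn A) k))).
Qed.

Lemma LG_R0 i : LG (R 0 i).
Proof.
apply: lg_base; split; first exact: in_gr_R.
by move=> n hn; apply: (rcoef_lt b r0 i).
Qed.

Lemma LG_W c : (forall k, (k <= c)%N -> forall i, LG (R k i)) -> forall m n,
  LG (fun a => \sum_(j < d) coord b m (br (tnth b j) (tnth b n)) *: R c.+1 j a).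
Proof.
move=> IH m n.
pose rest a := \sum_(i < c.+1) \sum_(j < d)
   coord b m (br (tnth b j) (R c n (0%:Z - (i : nat)%:Z))) *: R i j a.
have E : forall a, \sum_(j < d) coord b m (br (tnth b j) (tnth b n)) *: R c.+1 j a =
  (-1 : K) *: ((cybe1 b br r0 a 0%:Z c m n + rest a) + cybe3 b br r0 a 0%:Z c m n).
  move=> a; have := hr a 0%:Z c m n.
  have -> : cybe2 b br r0 a 0%:Z c m n = rest a +
      \sum_(j < d) coord b m (br (tnth b j) (tnth b n)) *: R c.+1 j a.
    rewrite /cybe2.
    have -> : absz (0%:Z + c%:Z + 1)%R = c.+1 by rewrite add0r -PoszD addn1.
    rewrite big_ord_recr /=; congr (_ + _); apply: eq_bigr => j _.
    have -> : 0%:Z - (c.+1)%:Z = - (c%:Z + 1) by lia.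
    by rewrite rcoef_neg eqxx.
  set X1 := cybe1 _ _ _ _ _ _ _ _; set X3 := cybe3 _ _ _ _ _ _ _ _.
  set W := \sum_(j < d) _; set Y := rest a => H.
  rewrite scaleN1r; apply/eqP; rewrite -addr_eq0; apply/eqP; rewrite -[RHS]H.
  by rewrite addrC -!addrA (addrC X3 W).
have -> : (fun a => \sum_(j < d) coord b m (br (tnth b j) (tnth b n)) *: R c.+1 j a) =
   (fun a => (-1 : K) *: ((fun a => (fun a => cybe1 b br r0 a 0%:Z c m n) a + rest a) a
                + (fun a => cybe3 b br r0 a 0%:Z c m n) a)).
  by apply: functional_extensionality => a; rewrite E.
apply: lg_scale; apply: lg_add; first apply: lg_add.
- have -> : (fun a => cybe1 b br r0 a 0%:Z c m n) =
     lbr br (- ((0%N)%:Z + 1)) (- (c%:Z + 1)) (R 0 m) (R c n).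
    by rewrite (lbr_cybe1 br).
  apply: lg_br.
  + exact: LG_R0.
  + exact: IH.
  + exact: van_R.
  + exact: van_R.
- apply: LG_sum => i; apply: LG_sum => j; apply: lg_scale.
  apply: IH; rewrite -ltnS; exact: ltn_ord.
- rewrite /cybe3; apply: LG_sum => i; apply: LG_sum => l; apply: LG_sum => j.
  apply: lg_scale; apply: IH; rewrite -ltnS; exact: ltn_ord.
Qed.

Lemma LG_R k i : LG (R k i).
Proof.
elim: k {-2}k (leqnn k) i => [|c IH] k hk i.
  by rewrite leqn0 in hk; move/eqP: hk ->; exact: LG_R0.
case: (leqP k c) => hkc; first exact: IH.
have -> : k = c.+1 by lia.
have hW := LG_W IH.
have [lam hlam] := span_br hlie hss hb i.
have -> : R c.+1 i = fun a => \sum_p lam p *: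
   (\sum_(j < d) coord b (enum_val p).1 (br (tnth b j) (tnth b (enum_val p).2)) *: R c.+1 j a).
  apply: functional_extensionality => a.
  under eq_bigr do rewrite scaler_sumr.
  rewrite exchange_big /=.
  under eq_bigr do (under eq_bigr do rewrite scalerA; rewrite -scaler_suml hlam).
  rewrite (bigD1 i) //= big1 ?addr0 ?eqxx ?scale1r //.
  by move=> j /negbTE ->; rewrite scale0r.
apply: LG_sum => p; apply: lg_scale; exact: hW.
Qed.

Lemma part2 f : IG f <-> LG f.
Proof.
split.
  case=> N [cf ->]; apply: LG_sum => k; apply: LG_sum => i; apply: lg_scale; exact: LG_R.
elim=> {f}.
- by move=> f [].
- exact: in_gr0.
- by move=> f h _ hf _ hh; apply: in_grD.
- by move=> a f _ hf; apply: in_grZ.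
- move=> N M f h _ hf _ hh vf vh; exact: (in_gr_lbr hlie hr hf hh vf vh).
Qed.

End G.

Unset Implicit Arguments.

Theorem lemma1p11 (K : fieldType) (hchar : [pchar K] =i pred0)
  (g : vectType K) (br : g -> g -> g) (hlie : is_lie_bracket br)
  (hss : lie_semisimple br)
  (d : nat) (b : d.-tuple g) (hb : basis_of fullv b)
  (horth : forall i j : 'I_d, killing br (tnth b i) (tnth b j) = (i == j)%:R)
  (r0 : nat -> nat -> 'I_d -> g)
  (hr : normalized_gen_rmatrix b br r0) :
  (forall f : int -> g,
     (in_gr b r0 f /\ (forall n : int, n < - 1 -> f n = 0)) <->
     (exists alpha : {linear g -> K^o},
        f = (fun n => \sum_(i < d) alpha (tnth b i) *: rcoef b r0 0 i n)))
  /\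
  (forall f : int -> g,
     in_gr b r0 f <->
     lie_gen br (fun h => in_gr b r0 h /\ (forall n : int, n < - 1 -> h n = 0)) f).
Proof.
split=> f; first exact: (part1 r0 hb).
exact: (part2 hlie hss hb hr).
Qed.
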